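(* For every integer $g \ge 0$, let $n'_g$ denote the number of gapsets of genus $g$ and depth at most $3$ (equivalently, the number of numerical semigroups $S$ of genus $g$ whose conductor $c$ and multiplicity $m$ satisfy $c \le 3m$). Then for all $g \ge 3$, $$n'_{g-1}+n'_{g-2} \,\le\, n'_{g} \,\le\, n'_{g-1}+n'_{g-2}+n'_{g-3}.$$
   Context: A gapset is a finite set $G \subset \mathbb{N}_+=\{1,2,3,\dots\}$ such that for all $z \in G$, whenever $z=x+y$ with $x,y\in\mathbb{N}_+$, we have $x\in G$ or $y\in G$; equivalently $G=\mathbb{N}\setminus S$ for a numerical semigroup $S$. The multiplicity of $G$ is the least $m\ge 1$ with $m\notin G$; its Frobenius number is $f=\max G$ (and $f=-1$ if $G=\emptyset$); its conductor is $c=f+1$; its genus is $|G|$; its depth is $q=\lceil c/m\rceil$. *)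

(* Defs.v *)
From mathcomp Require Import all_boot.
Set Implicit Arguments. Unset Strict Implicit. Unset Printing Implicit Defensive.

(* Finite subsets of N are represented by duplicate-free lists of nats;
   two such lists represent the same set iff they are permutations of each
   other, so we count gapsets as finite sets via [perm_eq]-classes below. *)

Definition is_gapset (G : seq nat) : Prop :=
  uniq G /\
  (forall z, z \in G -> 0 < z) /\
  (forall x y, 0 < x -> 0 < y -> x + y \in G -> (x \in G) \/ (y \in G)).

(* multiplicity: least m >= 1 with m \notin G (G is finite, so m <= max G + 1) *)
Definition multiplicity (G : seq nat) : nat :=
  (find (fun m => m \notin G) (iota 1 (\max_(z <- G) z).+1)).+1.

(* Frobenius number max G (-1 if G empty), conductor c = f + 1 *)
Definition conductor (G : seq nat) : nat :=
  if G is [::] then 0 else (\max_(z <- G) z).+1.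

Definition genus (G : seq nat) : nat := size G.

Definition depth (G : seq nat) : nat :=
  let c := conductor G in let m := multiplicity G in
  (c %/ m) + (c %% m != 0).

Definition enumerates_depth3 (g : nat) (s : seq (seq nat)) : Prop :=
  (forall G, G \in s -> is_gapset G /\ genus G = g /\ depth G <= 3) /\
  (forall G, is_gapset G -> genus G = g -> depth G <= 3 ->
     exists2 H, H \in s & perm_eq G H) /\
  (forall i j, i < size s -> j < size s ->
     perm_eq (nth [::] s i) (nth [::] s j) -> i = j).

(* Main.v *)
Require Import Defs.
From mathcomp Require Import all_boot.
From mathcomp Require Import zify.
From Stdlib Require Import ClassicalEpsilon.
Set Implicit Arguments. Unset Strict Implicit. Unset Printing Implicit Defensive.

Notation mu := multiplicity.
Arguments multiplicity : simpl never.

Lemma mem_iota1 m x : (x \in iota 1 m.-1) = (0 < x < m).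
Proof. rewrite mem_iota; lia. Qed.

Lemma mem_map_addn k s x : (x \in map (addn k) s) = (k <= x) && (x - k \in s).
Proof.
apply/mapP/andP => [[y ys ->]|[h1 h2]]; first by rewrite leq_addr addKn.
by exists (x - k) => //; rewrite subnKC.
Qed.

Definition enc m (A B : seq nat) :=
  iota 1 m.-1 ++ map (addn m) A ++ map (addn (m + m)) B.

Lemma mem_enc m A B x : (x \in enc m A B) =
  [|| 0 < x < m, (m <= x) && (x - m \in A) | (m + m <= x) && (x - (m + m) \in B)].
Proof. by rewrite /enc !mem_cat mem_iota1 !mem_map_addn. Qed.

Lemma size_enc m A B : size (enc m A B) = m.-1 + size A + size B.
Proof. by rewrite /enc !size_cat size_iota !size_map addnA. Qed.

Definition inr m (A : seq nat) := forall a, a \in A -> 0 < a < m.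

Lemma enc_uniq m A B : inr m A -> inr m B -> uniq A -> uniq B -> uniq (enc m A B).
Proof.
move=> hA hB uA uB; rewrite /enc cat_uniq iota_uniq /=; apply/andP; split.
- apply/hasPn => x; rewrite mem_cat !mem_map_addn => /orP [/andP[h1 h2] | /andP [h1 h2]];
  rewrite mem_iota1; [have := hA _ h2 | have := hB _ h2]; lia.
- rewrite cat_uniq !(map_inj_uniq (@addnI _)) uA uB /= andbT.
  apply/hasPn => x; rewrite !mem_map_addn => /andP[h1 h2]; apply/negP => /andP[h3 h4].
  have := hA _ h4; have := hB _ h2; lia.
Qed.

Lemma enc_mem_eq m A B A' B' : A =i A' -> B =i B' -> enc m A B =i enc m A' B'.
Proof. by move=> hA hB x; rewrite !mem_enc hA hB. Qed.

Lemma mem_enc_mid m A B a : 0 < a < m -> (m + a \in enc m A B) = (a \in A).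
Proof.
move=> h; rewrite mem_enc addKn leq_addr /=.
have -> : (0 < m + a < m) = false by lia.
have -> : (m + m <= m + a) = false by lia.
by rewrite /= orbF.
Qed.

Lemma mem_enc_top m A B b : inr m A -> 0 < b < m -> (m + m + b \in enc m A B) = (b \in B).
Proof.
move=> hA h; rewrite mem_enc.
have -> : (0 < m + m + b < m) = false by lia.
have -> : m + m + b - m = m + b by lia.
have -> : (m + b \in A) = false.
  by apply/negP => /hA; lia.
have -> : m + m + b - (m + m) = b by lia.
by rewrite leq_addr andbF.
Qed.

Lemma mul_spec G : 0 < mu G /\ mu G \notin G /\ (forall x, 0 < x < mu G -> x \in G).
Proof.
rewrite /multiplicity.
set M := \max_(z <- G) z.
set s := iota 1 M.+1.
set p := (fun m => m \notin G).
have hM : forall z, z \in G -> z <= M.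
  by move=> z hz; apply: (@leq_bigmax_seq _ G xpredT (fun z => z) z hz).
have hs : has p s.
  apply/hasP; exists M.+1; first by rewrite mem_iota; lia.
  by rewrite /p; apply/negP => /hM; lia.
have hf := hs; rewrite has_find size_iota in hf.
split => //; split.
  by have := nth_find 0 hs; rewrite /p nth_iota // add1n.
move=> x hx.
have hx' : x.-1 < find p s by lia.
have := before_find 0 hx'; rewrite /p nth_iota; last by lia.
by move/negbFE; rewrite add1n prednK //; lia.
Qed.

Lemma mul_unique G m : 0 < m -> m \notin G -> (forall x, 0 < x < m -> x \in G) -> mu G = m.
Proof.
move=> h0 h1 h2; have [s0 [s1 s2]] := mul_spec G.
case: (ltngtP (mu G) m) => // h.
- have h' : mu G \in G by apply: h2; rewrite s0 h.
  by rewrite h' in s1.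
- have h' : m \in G by apply: s2; rewrite h0 h.
  by rewrite h' in h1.
Qed.

Lemma mul_eq G H : G =i H -> mu G = mu H.
Proof.
move=> e; have [s0 [s1 s2]] := mul_spec H.
apply: mul_unique => //; first by rewrite e.
by move=> x hx; rewrite e; apply: s2.
Qed.

Lemma maxlt (G : seq nat) k : 0 < k -> (\max_(z <- G) z < k) = all (fun x => x < k) G.
Proof.
move=> hk; elim: G => [|z G IH]; first by rewrite big_nil.
by rewrite big_cons gtn_max IH.
Qed.

Lemma depth3P G : (depth G <= 3) <-> (forall x, x \in G -> x < 3 * mu G).
Proof.
have [hm _] := mul_spec G.
have hc : (conductor G <= 3 * mu G) <-> (forall x, x \in G -> x < 3 * mu G).
  case: G hm => [|z G] hm /=; first by split.
  rewrite maxlt; last by lia.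
  by split; [move/allP | move=> h; apply/allP].
rewrite -hc /depth.
set c := conductor G; set m := mu G.
have -> : (c %/ m + (c %% m != 0) <= 3) = (c <= 3 * m).
  have := divn_eq c m. have := ltn_pmod c hm. by case: eqP; nia.
by [].
Qed.

Definition AofB m j (G : seq nat) := [seq a <- iota 1 j | m + a \in G].
Definition BofB m j (G : seq nat) := [seq b <- iota 1 j | m + m + b \in G].
Definition Aof G := AofB (mu G) (mu G).-1 G.
Definition Bof G := BofB (mu G) (mu G).-1 G.

Lemma mem_AofB m j G a : (a \in AofB m j G) = (0 < a <= j) && (m + a \in G).
Proof. rewrite mem_filter mem_iota andbC; congr (_ && _); lia. Qed.
Lemma mem_BofB m j G a : (a \in BofB m j G) = (0 < a <= j) && (m + m + a \in G).
Proof. rewrite mem_filter mem_iota andbC; congr (_ && _); lia. Qed.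

Lemma AofB_inr m j G : inr j.+1 (AofB m j G).
Proof. by move=> a; rewrite mem_AofB; lia. Qed.
Arguments AofB_inr : clear implicits.
Lemma BofB_inr m j G : inr j.+1 (BofB m j G).
Proof. by move=> a; rewrite mem_BofB; lia. Qed.
Arguments BofB_inr : clear implicits.
Lemma AofB_uniq m j G : uniq (AofB m j G).
Proof. exact/filter_uniq/iota_uniq. Qed.
Lemma BofB_uniq m j G : uniq (BofB m j G).
Proof. exact/filter_uniq/iota_uniq. Qed.

Definition validP (m : nat) (A B : seq nat) :=
  (forall b, b \in B -> b \in A) /\
  (forall a b, 0 < a -> 0 < b -> a + b \in B -> a \in A \/ b \in A).

Lemma mul_enc m A B : 0 < m -> inr m A -> mu (enc m A B) = m.
Proof.
move=> hm hA; apply: mul_unique => //.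
- rewrite mem_enc subnn; apply/negP => /orP [|/orP[]]; try lia.
  by move=> /andP [_ /hA]; lia.
- by move=> x hx; rewrite mem_enc hx.
Qed.

Lemma enc_ok m A B : 0 < m -> inr m A -> inr m B -> uniq A -> uniq B -> validP m A B ->
  is_gapset (enc m A B) /\ mu (enc m A B) = m /\ depth (enc m A B) <= 3.
Proof.
move=> hm hA hB uA uB [hBA hcl].
have hmul := mul_enc B hm hA.
split; last split => //.
- split; first exact: enc_uniq.
  split.
    move=> z; rewrite mem_enc => /orP [|/orP []]; first lia.
      by move=> /andP [_ /hA]; lia.
    by move=> /andP [_ /hB]; lia.
  move=> x y hx hy; rewrite mem_enc => /orP [h|/orP [/andP [h1 h2]|/andP [h1 h2]]].
  + by left; rewrite mem_enc; lia.
  + have := hA _ h2 => h3.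
    case: (ltnP x m) => hxm.
      by left; rewrite mem_enc; apply/orP; left; lia.
    by right; rewrite mem_enc; apply/orP; left; lia.
  + have := hB _ h2 => h3.
    case: (ltnP x m) => hxm.
      by left; rewrite mem_enc; apply/orP; left; lia.
    case: (ltnP y m) => hym.
      by right; rewrite mem_enc; apply/orP; left; lia.
    case: (posnP (x - m)) => ha.
      right; rewrite mem_enc; apply/orP; right; apply/orP; left.
      have -> : y - m = x + y - (m + m) by lia.
      by rewrite hBA // andbT.
    case: (posnP (y - m)) => hb.
      left; rewrite mem_enc; apply/orP; right; apply/orP; left.
      have -> : x - m = x + y - (m + m) by lia.
      by rewrite hBA // andbT.
    have e : x + y - (m + m) = (x - m) + (y - m) by lia.
    rewrite e in h2.
    case: (hcl _ _ ha hb h2) => h4.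
      by left; rewrite mem_enc h4 hxm /= orbT.
    by right; rewrite mem_enc h4 hym /= orbT.
- apply/depth3P => x; rewrite hmul mem_enc => /orP [|/orP []]; first lia.
    by move=> /andP [_ /hA]; lia.
  by move=> /andP [_ /hB]; lia.
Qed.

Lemma gap_facts G : is_gapset G -> depth G <= 3 ->
  [/\ 0 < mu G, mu G \notin G, mu G + mu G \notin G,
      (forall x, 0 < x < mu G -> x \in G) &
      (forall x, x \in G -> 0 < x < 3 * mu G)].
Proof.
move=> [uG [hpos hcl]] /depth3P hup.
have [hm [hn hlow]] := mul_spec G.
split => //.
- by apply/negP => /(hcl _ _ hm hm) []; apply/negP.
- by move=> x hx; rewrite hpos ?hup.
Qed.

Lemma decomp G : is_gapset G -> depth G <= 3 -> G =i enc (mu G) (Aof G) (Bof G).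
Proof.
move=> hG hd; have [hm hn h2m hlow hr] := gap_facts hG hd.
move=> x; rewrite mem_enc mem_AofB mem_BofB.
have -> : (x \in G) = (@in_mem nat x (mem G)) by [].
set m := mu G in hm hn h2m hlow hr *.
have [hx|hx] := ltnP x m.
  case: (posnP x) => x0.
    rewrite x0; have -> : (0 \in G) = false by apply/negP => /hr; lia.
    lia.
  rewrite (hlow x); lia.
have [hx2|hx2] := ltnP x (m + m).
  have -> : m + (x - m) = x by lia.
  have -> : m + m + (x - (m + m)) = m + m by lia.
  rewrite (negbTE h2m).
  case: (eqVneq x m) => xm.
    by rewrite xm (negbTE hn); lia.
  have -> : (0 < x - m <= m.-1) = true by lia.
  by rewrite !andbF /= ?orbF.

have -> : m + m + (x - (m + m)) = x by lia.
case: (eqVneq x (m + m)) => xm.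
  by rewrite xm (negbTE h2m); lia.
case: (ltnP x (3 * m)) => h3.
  lia.
have -> : (x \in G) = false by apply/negP => /hr; lia.
lia.
Qed.

Lemma decomp_valid G : is_gapset G -> depth G <= 3 ->
  [/\ inr (mu G) (Aof G), inr (mu G) (Bof G), uniq (Aof G), uniq (Bof G) &
      validP (mu G) (Aof G) (Bof G)].
Proof.
move=> hG hd; have [hm hn h2m hlow hr] := gap_facts hG hd.
have e : (mu G).-1.+1 = mu G by lia.
split; rewrite /Aof /Bof.
- by rewrite -{1}e; apply: AofB_inr.
- by rewrite -{1}e; apply: BofB_inr.
- exact: AofB_uniq.
- exact: BofB_uniq.
case: hG => [_ [_ hcl]].
rewrite /validP /Aof /Bof.
split.
- move=> b; rewrite mem_AofB mem_BofB => /andP [h1 h2]; rewrite h1 /=.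
  have := hcl (mu G) (mu G + b) hm (ltn_addr _ hm); rewrite addnA => /(_ h2) [].
    by rewrite (negbTE hn).
  by [].
- move=> a b ha hb; rewrite !mem_AofB => /andP [h1 h2].
  have e2 : mu G + mu G + (a + b) = (mu G + a) + (mu G + b) by lia.
  rewrite e2 in h2.
  case: (hcl _ _ (ltn_addr _ hm) (ltn_addr _ hm) h2) => h3.
    by left; rewrite h3 andbT; lia.
  by right; rewrite h3 andbT; lia.
Qed.

Definition ex (b : bool) (m : nat) : seq nat := if b then [:: m] else [::].

Definition phi (b2 b3 : bool) G :=
  enc (mu G).+1 (Aof G ++ ex b2 (mu G)) (Bof G ++ ex b3 (mu G)).
Definition psi G :=
  enc (mu G).-1 (AofB (mu G) (mu G).-2 G) (BofB (mu G) (mu G).-2 G).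

Lemma mu_pos G : 0 < mu G.
Proof. by case: (mul_spec G). Qed.

Lemma Aof_inr G : inr (mu G) (Aof G).
Proof. have := mu_pos G => h. have e : (mu G).-1.+1 = mu G by lia.
rewrite /Aof -{1}e; exact: AofB_inr. Qed.
Arguments Aof_inr : clear implicits.
Lemma Bof_inr G : inr (mu G) (Bof G).
Proof. have := mu_pos G => h. have e : (mu G).-1.+1 = mu G by lia.
rewrite /Bof -{1}e; exact: BofB_inr. Qed.
Arguments Bof_inr : clear implicits.

Lemma mem_ex b m a : (a \in ex b m) = b && (a == m).
Proof. by case: b; rewrite /ex ?inE. Qed.

Lemma ext_inr m A b : 0 < m -> inr m A -> inr m.+1 (A ++ ex b m).
Proof.
move=> hm hA a; rewrite mem_cat mem_ex => /orP [/hA|/andP [_ /eqP ->]]; lia.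
Qed.
Arguments ext_inr : clear implicits.

Lemma ext_uniq m A b : inr m A -> uniq A -> uniq (A ++ ex b m).
Proof.
move=> hA uA; rewrite cat_uniq uA /=; case: b => //=; rewrite orbF andbT.
by apply/negP => /hA; lia.
Qed.

Lemma Aof_uniq G : uniq (Aof G). Proof. exact: AofB_uniq. Qed.
Lemma Bof_uniq G : uniq (Bof G). Proof. exact: BofB_uniq. Qed.

Lemma phi_eq b2 b3 G H : G =i H -> phi b2 b3 G = phi b2 b3 H.
Proof.
move=> e; rewrite /phi /Aof /Bof /AofB /BofB (mul_eq e).
by congr enc; congr (_ ++ _); apply: eq_filter => a; rewrite e.
Qed.

Lemma psi_eq G H : G =i H -> psi G = psi H.
Proof.
move=> e; rewrite /psi /AofB /BofB (mul_eq e).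
by congr enc; apply: eq_filter => a; rewrite e.
Qed.

Lemma mu_phi b2 b3 G : mu (phi b2 b3 G) = (mu G).+1.
Proof. apply: mul_enc => //; apply: ext_inr; [exact: mu_pos | exact: Aof_inr]. Qed.

Lemma phi_uniq b2 b3 G : uniq (phi b2 b3 G).
Proof.
have hm := mu_pos G.
apply: enc_uniq.
- exact: (@ext_inr _ _ b2 hm (Aof_inr G)).
- exact: (@ext_inr _ _ b3 hm (Bof_inr G)).
- exact: (@ext_uniq _ _ b2 (Aof_inr G) (Aof_uniq G)).
- exact: (@ext_uniq _ _ b3 (Bof_inr G) (Bof_uniq G)).
Qed.

Lemma gap_perm G : is_gapset G -> depth G <= 3 -> perm_eq G (enc (mu G) (Aof G) (Bof G)).
Proof.
move=> hG hd; apply: uniq_perm; first by case: hG.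
  by apply: enc_uniq; [exact: Aof_inr | exact: Bof_inr | exact: Aof_uniq | exact: Bof_uniq].
exact: decomp.
Qed.

Lemma genus_phi b2 b3 G : is_gapset G -> depth G <= 3 ->
  size (phi b2 b3 G) = size G + 1 + b2 + b3.
Proof.
move=> hG hd; rewrite (perm_size (gap_perm hG hd)) /phi !size_enc !size_cat.
have := mu_pos G; rewrite /ex; move: (mu G) => m; case: b2; case: b3 => /=; lia.
Qed.

Lemma phi_ok b2 G : is_gapset G -> depth G <= 3 ->
  is_gapset (phi b2 false G) /\ depth (phi b2 false G) <= 3.
Proof.
move=> hG hd; have [_ _ _ _ [hBA hcl]] := decomp_valid hG hd.
have hm := mu_pos G.
have hv : validP (mu G).+1 (Aof G ++ ex b2 (mu G)) (Bof G ++ ex false (mu G)).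
  split.
    by move=> b; rewrite /= cats0 mem_cat => /hBA ->.
  move=> a b ha hb; rewrite /= cats0 => /(hcl _ _ ha hb) [h|h].
    by left; rewrite mem_cat h.
  by right; rewrite mem_cat h.
have [h1 [_ h3]] := @enc_ok (mu G).+1 (Aof G ++ ex b2 (mu G)) (Bof G ++ ex false (mu G))
  (ltn0Sn _) (@ext_inr _ _ b2 hm (Aof_inr G)) (@ext_inr _ _ false hm (Bof_inr G))
  (@ext_uniq _ _ b2 (Aof_inr G) (Aof_uniq G)) (@ext_uniq _ _ false (Bof_inr G) (Bof_uniq G)) hv.
by [].
Qed.

Lemma psi_phi b2 b3 G : is_gapset G -> depth G <= 3 -> psi (phi b2 b3 G) =i G.
Proof.
move=> hG hd x; rewrite (decomp hG hd x) /psi mu_phi /=.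
have hm := mu_pos G.
set m := mu G.
apply: enc_mem_eq => a.
- rewrite mem_AofB.
  case: (boolP (0 < a <= m.-1)) => h /=.
    rewrite /phi mem_enc_mid; last by lia.
    rewrite mem_cat mem_ex.
    have -> : (a == m) = false by lia.
    by rewrite andbF orbF.
  by apply/esym/negP => /Aof_inr; lia.
- rewrite mem_BofB.
  case: (boolP (0 < a <= m.-1)) => h /=.
    rewrite /phi mem_enc_top; last by lia.
      rewrite mem_cat mem_ex.
      have -> : (a == m) = false by lia.
      by rewrite andbF orbF.
    exact: (@ext_inr _ _ b2 hm (Aof_inr G)).
  by apply/esym/negP => /Bof_inr; lia.
Qed.

Lemma mu_psi G : 1 < mu G -> mu (psi G) = (mu G).-1.
Proof.
move=> h; apply: mul_enc; first lia.
have e : (mu G).-2.+1 = (mu G).-1 by lia.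
rewrite -{1}e; exact: AofB_inr.
Qed.

Lemma phi_psi G : is_gapset G -> depth G <= 3 -> 1 < mu G ->
  G =i phi (mu G + (mu G).-1 \in G) (mu G + mu G + (mu G).-1 \in G) (psi G).
Proof.
move=> hG hd h1 x; rewrite (decomp hG hd x) /phi mu_psi //.
have -> : (mu G).-1.+1 = mu G by lia.
have hinr : inr (mu G).-1 (AofB (mu G) (mu G).-2 G).
  have e : (mu G).-2.+1 = (mu G).-1 by lia.
  rewrite -{1}e; exact: AofB_inr.
rewrite /Aof /Bof mu_psi //.
set m := mu G in h1 hinr *.
apply: enc_mem_eq => a.
- rewrite mem_cat mem_ex !mem_AofB.
  case: (boolP (0 < a <= m.-2)) => h2; rewrite ?andTb ?andFb ?orFb.
    rewrite /psi -/m mem_enc_mid; last by lia.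
    rewrite mem_AofB h2 /=.
    have -> : (a == m.-1) = false by lia.
    have -> : (0 < a <= m.-1) = true by lia.
    by rewrite andbF orbF.
  case: (eqVneq a m.-1) => h3.
    by rewrite h3 andbT; have -> : (0 < m.-1 <= m.-1) = true by lia.
  by rewrite andbF; have -> : (0 < a <= m.-1) = false by lia.
- rewrite mem_cat mem_ex !mem_BofB.
  case: (boolP (0 < a <= m.-2)) => h2; rewrite ?andTb ?andFb ?orFb.
    rewrite /psi -/m mem_enc_top //; last by lia.
    rewrite mem_BofB h2 /=.
    have -> : (a == m.-1) = false by lia.
    have -> : (0 < a <= m.-1) = true by lia.
    by rewrite andbF orbF.
  case: (eqVneq a m.-1) => h3.
    by rewrite h3 andbT; have -> : (0 < m.-1 <= m.-1) = true by lia.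
  by rewrite andbF; have -> : (0 < a <= m.-1) = false by lia.
Qed.

Lemma psi_ok G : is_gapset G -> depth G <= 3 -> 1 < mu G ->
  is_gapset (psi G) /\ depth (psi G) <= 3.
Proof.
move=> hG hd h1; have [_ _ _ _ [hBA hcl]] := decomp_valid hG hd.
have hinr : forall j, j.+1 = (mu G).-1 -> inr (mu G).-1 (AofB (mu G) j G).
  move=> j e; rewrite -e; exact: AofB_inr.
have hinr2 : forall j, j.+1 = (mu G).-1 -> inr (mu G).-1 (BofB (mu G) j G).
  move=> j e; rewrite -e; exact: BofB_inr.
have e : (mu G).-2.+1 = (mu G).-1 by lia.
have hv : validP (mu G).-1 (AofB (mu G) (mu G).-2 G) (BofB (mu G) (mu G).-2 G).
  split.
    move=> b; rewrite !mem_AofB => /andP [hb1 hb2]; rewrite hb1 /=.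
    have : b \in Bof G by rewrite /Bof mem_BofB hb2 andbT; lia.
    by move/hBA; rewrite /Aof mem_AofB => /andP [].
  move=> a b ha hb; rewrite !mem_AofB => /andP [hab1 hab2].
  have : a + b \in Bof G by rewrite /Bof mem_BofB hab2 andbT; lia.
  move/(hcl _ _ ha hb); rewrite /Aof !mem_AofB => [[/andP [_ h]|/andP [_ h]]].
    by left; rewrite h andbT; lia.
  by right; rewrite h andbT; lia.
have hm1 : 0 < (mu G).-1 by lia.
have [g1 [_ g3]] := @enc_ok (mu G).-1 (AofB (mu G) (mu G).-2 G) (BofB (mu G) (mu G).-2 G)
  hm1 (hinr _ e) (hinr2 _ e) (AofB_uniq _ _ _) (BofB_uniq _ _ _) hv.
by [].
Qed.

Lemma phi_disj G H : ~ (phi false false G =i phi true false H).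
Proof.
move=> e; have := mul_eq e; rewrite !mu_phi => /eqP; rewrite eqSS => /eqP em.
have := e ((mu H).+1 + mu H).
rewrite /phi em mem_enc_mid; last by have := mu_pos H; lia.
rewrite mem_enc_mid; last by have := mu_pos H; lia.
rewrite !mem_cat !mem_ex eqxx andbT orbT orbF => h.
have := Aof_inr G (mu H); rewrite h em => /(_ isT); lia.
Qed.

Unset Implicit Arguments.

Definition Pg g G := is_gapset G /\ genus G = g /\ depth G <= 3.
Definition Cn (G : seq nat) := sort leq G.

Lemma CnP G H : reflect (Cn G = Cn H) (perm_eq G H).
Proof. exact: (perm_sortP leq_total leq_trans anti_leq). Qed.

Lemma Pg_perm g G H : Pg g G -> perm_eq G H -> Pg g H.
Proof.
move=> [[uG [hpos hcl]] [hg hd]] pe.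
have e := perm_mem pe.
split; last split.
- split; first by rewrite -(perm_uniq pe).
  split; first by move=> z; rewrite -e; apply: hpos.
  by move=> x y hx hy; rewrite -!e; apply: hcl.
- by rewrite /genus -(perm_size pe).
- have hd' := proj1 (depth3P G) hd.
  by apply/depth3P => x; rewrite -(mul_eq e) -e; exact: hd'.
Qed.

Lemma en_uniq g s : enumerates_depth3 g s -> uniq (map Cn s).
Proof.
move=> [_ [_ h3]]; apply/(uniqP [::]) => i j; rewrite !inE size_map => hi hj.
by rewrite !(nth_map [::]) // => /CnP; apply: h3.
Qed.

Lemma en_mem g s G : enumerates_depth3 g s -> Pg g G -> Cn G \in map Cn s.
Proof.
move=> [_ [h2 _]] [hG [hg hd]]; have [H hH pe] := h2 G hG hg hd.
by rewrite (CnP _ _ pe); apply: map_f.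
Qed.

Lemma en_in_uniq g s (f : seq nat -> seq nat) : enumerates_depth3 g s ->
  (forall G H, G \in s -> H \in s -> perm_eq (f G) (f H) -> perm_eq G H) ->
  uniq (map (fun G => Cn (f G)) s).
Proof.
move=> [_ [_ h3]] hf; apply/(uniqP [::]) => i j; rewrite !inE size_map => hi hj.
rewrite !(nth_map [::]) // => /CnP /hf h; apply: h3 => //; apply: h; exact: mem_nth.
Qed.

Lemma size_Aof G : size (Aof G) <= (mu G).-1.
Proof. by rewrite /Aof /AofB size_filter (leq_trans (count_size _ _)) // size_iota. Qed.

Lemma genus_dec G : is_gapset G -> depth G <= 3 ->
  size G = (mu G).-1 + size (Aof G) + size (Bof G).
Proof. by move=> hG hd; rewrite (perm_size (gap_perm hG hd)) size_enc. Qed.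

Lemma covr g' s' b2 b3 X G : enumerates_depth3 g' s' -> Pg g' X ->
  perm_eq G (phi b2 b3 X) -> Cn G \in map (fun H => Cn (phi b2 b3 H)) s'.
Proof.
move=> [_ [h2 _]] [hX [hg hd]] pe; have [H hH pe2] := h2 X hX hg hd.
rewrite (CnP _ _ pe) (phi_eq b2 b3 (perm_mem pe2)).
exact: (map_f (fun H => Cn (phi b2 b3 H))).
Qed.

Fixpoint pw (l : seq nat) : seq (seq nat) :=
  if l is x :: l' then [seq x :: s | s <- pw l'] ++ pw l' else [:: [::]].

Lemma pw_sub s l : subseq s l -> s \in pw l.
Proof.
elim: l s => [|x l IH] s; first by rewrite subseq0 => /eqP ->; rewrite inE.
case: s => [|y s] /=.
  by move=> _; rewrite mem_cat; apply/orP; right; apply: IH; apply: sub0seq.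
case: eqP => [-> h|_ h]; rewrite mem_cat; apply/orP.
  by left; apply: map_f; apply: IH.
by right; apply: IH.
Qed.

Lemma pw_subseq s l : s \in pw l -> subseq s l.
Proof.
elim: l s => [|x l IH] s /=; first by rewrite inE => /eqP ->.
rewrite mem_cat => /orP [/mapP [t ht ->]|h].
  by rewrite /= eqxx IH.
exact: subseq_trans (IH _ h) (subseq_cons l x).
Qed.

Definition Pb g G : bool := if excluded_middle_informative (Pg g G) then true else false.

Lemma PbP g G : Pb g G = true <-> Pg g G.
Proof. by rewrite /Pb; case: excluded_middle_informative. Qed.

Lemma exists_enum g : exists s, enumerates_depth3 g s.
Proof.
set N := 3 * g + 3.
exists (undup [seq G <- pw (iota 1 N) | Pb g G]).
split; last split.
- move=> G; rewrite mem_undup mem_filter => /andP [/PbP h _]; exact: h.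
- move=> G hG hg hd.
  set H := [seq x <- iota 1 N | x \in G].
  have hsz := genus_dec G hG hd.
  have hsA := size_Aof G.
  have [hm _ _ _ hr] := gap_facts hG hd.
  have e : G =i H.
    move=> x; rewrite mem_filter mem_iota andbC.
    case: (boolP (x \in G)) => hx; rewrite ?andbF ?andbT //; have := hr _ hx; rewrite /genus in hg; lia.
  have pe : perm_eq G H.
    apply: uniq_perm => //; first by case: hG.
    exact/filter_uniq/iota_uniq.
  exists H => //.
  rewrite mem_undup mem_filter; apply/andP; split.
    by apply/PbP; exact: (Pg_perm _ _ _ (conj hG (conj hg hd)) pe).
  by apply: pw_sub; apply: filter_subseq.
- move=> i j hi hj.
  set s := undup _.
  have hsort : forall k, k < size s -> sort leq (nth [::] s k) = nth [::] s k.
    move=> k hk; apply: sorted_sort; first exact: leq_trans.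
    have := mem_nth [::] hk; rewrite mem_undup mem_filter => /andP [_ /pw_subseq h].
    apply: (sub_sorted ltnW).
    apply: (subseq_sorted _ h); [exact: ltn_trans | exact: iota_ltn_sorted].
  move/CnP; rewrite /Cn (hsort i hi) (hsort j hj) => h.
  by apply/eqP; rewrite -(nth_uniq [::] hi hj (undup_uniq _)) h.
Qed.

Lemma size_Bof G : size (Bof G) <= (mu G).-1.
Proof. by rewrite /Bof /BofB size_filter (leq_trans (count_size _ _)) // size_iota. Qed.

Lemma en_P g s G : enumerates_depth3 g s -> G \in s -> Pg g G.
Proof. by move=> [h1 _] /h1. Qed.

Theorem mainTheorem1 :
  (forall g : nat, exists s : seq (seq nat), enumerates_depth3 g s) /\
  (forall (g : nat) (s0 s1 s2 s3 : seq (seq nat)), 3 <= g ->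
     enumerates_depth3 g s0 -> enumerates_depth3 g.-1 s1 ->
     enumerates_depth3 g.-2 s2 -> enumerates_depth3 (g - 3) s3 ->
     size s1 + size s2 <= size s0 /\
     size s0 <= size s1 + size s2 + size s3).
Proof.
split; first exact: exists_enum.
move=> g s0 s1 s2 s3 hg e0 e1 e2 e3.
have inj : forall b2 g' s, enumerates_depth3 g' s ->
    uniq (map (fun G => Cn (phi b2 false G)) s).
  move=> b2 g' s e; apply: (en_in_uniq _ _ _ e) => G H hG hH pe.
  have [gG [_ dG]] := en_P _ _ _ e hG; have [gH [_ dH]] := en_P _ _ _ e hH.
  have e1' : G =i H.
    move=> x; rewrite -(psi_phi b2 false gG dG x).
    by rewrite -(psi_phi b2 false gH dH x) (psi_eq (perm_mem pe)).
  by apply: uniq_perm e1'; [case: gG | case: gH].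
split.
- have u : uniq (map (fun G => Cn (phi false false G)) s1 ++
                 map (fun G => Cn (phi true false G)) s2).
    rewrite cat_uniq (inj false _ _ e1) (inj true _ _ e2) andbT /=.
    apply/hasPn => x /mapP [H hH ->]; apply/negP => /mapP [G hG].
    move/CnP/perm_mem => ee.
    by apply: (@phi_disj G H) => y; rewrite ee.
  rewrite -(size_map (fun G => Cn (phi false false G)) s1)
          -(size_map (fun G => Cn (phi true false G)) s2) -size_cat -(size_map Cn s0).
  apply: (uniq_leq_size u) => x; rewrite mem_cat => /orP [] /mapP [G hG ->].
  + have [gG [hgG dG]] := en_P _ _ _ e1 hG.
    have [pg pd] := phi_ok false gG dG.
    apply: (en_mem _ _ (phi false false G) e0); split => //; split => //.
    rewrite /genus (genus_phi false false gG dG); rewrite /genus in hgG; lia.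
  + have [gG [hgG dG]] := en_P _ _ _ e2 hG.
    have [pg pd] := phi_ok true gG dG.
    apply: (en_mem _ _ (phi true false G) e0); split => //; split => //.
    rewrite /genus (genus_phi true false gG dG); rewrite /genus in hgG; lia.
- have hsz : size s0 <= size (map (fun G => Cn (phi false false G)) s1 ++
                 map (fun G => Cn (phi true false G)) s2 ++
                 map (fun G => Cn (phi true true G)) s3).
    rewrite -(size_map Cn s0); apply: (uniq_leq_size (en_uniq _ _ e0)) => x /mapP [G hG ->].
    have [gG [hgG dG]] := en_P _ _ _ e0 hG.
    have hgs := genus_dec G gG dG; have hsA := size_Aof G; have hsB := size_Bof G.
    have h1 : 1 < mu G by rewrite /genus in hgG; lia.
    have [pG pd] := psi_ok gG dG h1.
    have key : forall c2 c3 : bool, (c3 -> c2) -> perm_eq G (phi c2 c3 (psi G)) ->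
        size G = size (psi G) + 1 + c2 + c3 ->
        Cn G \in map (fun G => Cn (phi false false G)) s1 ++
                 map (fun G => Cn (phi true false G)) s2 ++
                 map (fun G => Cn (phi true true G)) s3.
      move=> c2 c3 c32 pe gs; rewrite /genus in hgG; rewrite !mem_cat.
      move: c32 pe gs; case: c2; case: c3 => c32 pe /= gs; [ | | by have := c32 isT | ].
      + apply/orP; right; apply/orP; right; apply: (covr _ _ _ _ _ _ e3 _ pe).
        by split => //; split => //; rewrite /genus; lia.
      + apply/orP; right; apply/orP; left; apply: (covr _ _ _ _ _ _ e2 _ pe).
        by split => //; split => //; rewrite /genus; lia.
      + apply/orP; left; apply: (covr _ _ _ _ _ _ e1 _ pe).
        by split => //; split => //; rewrite /genus; lia.
    apply: (key (mu G + (mu G).-1 \in G) (mu G + mu G + (mu G).-1 \in G)).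
    + have [_ _ _ _ [hBA _]] := decomp_valid gG dG.
      move=> h; have : (mu G).-1 \in Bof G by rewrite /Bof mem_BofB h andbT; lia.
      by move/hBA; rewrite /Aof mem_AofB => /andP [].
    + apply: uniq_perm; [by case: gG | exact: phi_uniq | exact: phi_psi].
    + rewrite -(genus_phi _ _ pG pd); apply: perm_size; apply: uniq_perm;
        [by case: gG | exact: phi_uniq | exact: phi_psi].
  by move: hsz; rewrite !size_cat !size_map addnA.
Qed.
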